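(* Let $T$ and $\tilde T$ be positive integers, $\theta>0$ a firing threshold, and $\psi\in\mathbb{R}$ a shift. Consider a single neuron of the $l$-th layer whose input currents over $T$ time-steps form a vector $\mathbf{I}=(I^{1},\dots,I^{T})^{\top}\in\mathbb{R}^{T}$ with average $z=\frac{1}{T}\sum_{t=1}^{T}I^{t}$ (so $z$ plays the role of $\mathbf{W}^l\mathbf{r}^{(l-1),T}$). Define the parallel conversion matrix $\mathbf{\Lambda}_{\mathrm{pc}}\in\mathbb{R}^{T\times T}$ by $(\mathbf{\Lambda}_{\mathrm{pc}})_{x,j}=\frac{1}{T-x+1}$ for all $x,j\in\{1,\dots,T\}$, and the shift vector $$\mathbf{b}=\Big[\tfrac{\psi}{T},\ \dots,\ \tfrac{\psi}{T-x+1},\ \dots,\ \psi\Big]^{\top}\in\mathbb{R}^{T},\qquad b_x=\frac{\psi}{T-x+1}.$$ The parallel spike output is $\mathbf{s}\in\{0,1\}^{T}$ with $s_x=1$ if $(\mathbf{\Lambda}_{\mathrm{pc}}\mathbf{I}+\mathbf{b})_x\ge\theta$ and $s_x=0$ otherwise, and the SNN average firing rate is $r^{T}=\frac{\theta}{T}\sum_{x=1}^{T}s_x$. For a positive integer $N$ define the QCFS output $$r_{\mathrm{QCFS}}^{N}(z)=\frac{\theta}{N}\,\mathrm{Clip}\!\Big(\Big\lfloor\frac{zN+\psi}{\theta}\Big\rfloor,0,N\Big),$$ where $\mathrm{Clip}(a,0,N)=\min(\max(a,0),N)$. Then: (i) If $\tilde T=T$, then $r^{T}=r_{\mathrm{QCFS}}^{\tilde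 T}(z)$ for every input $\mathbf{I}\in\mathbb{R}^T$. (ii) If $\tilde T\neq T$ and $\psi=\theta/2$, and $z$ is a random variable uniformly distributed on $[0,\theta]$ (with $\mathbf{I}$ any input vector with average $z$), then $\mathbb{E}\big(r^{T}-r_{\mathrm{QCFS}}^{\tilde T}(z)\big)=0$.
   Context: In the converted spiking network, each spiking neuron layer computes all $T$ time-steps at once (''parallel inference''): the vector of membrane values is $\mathbf{\Lambda}_{\mathrm{pc}}\mathbf{I}+\mathbf{b}$ and a spike is emitted at step $x$ exactly when the $x$-th entry reaches the threshold $\theta$; there is no reset phase. The QCFS (Quantization-Clip-Floor-Shift) function with $N$ quantization levels is the ANN activation $r_{\mathrm{QCFS}}^{N}$ defined in the claim, applied to the pre-activation $z$. All statements are per neuron (elementwise for a layer). *)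

(* Defs.v *)
From HB Require Import structures.
From mathcomp Require Import all_boot all_order all_algebra.
From mathcomp Require Import all_classical all_reals all_analysis.
Set Implicit Arguments. Unset Strict Implicit. Unset Printing Implicit Defensive.
Import Order.TTheory GRing.Theory Num.Theory.
Local Open Scope ring_scope.

Section SNN.
Variable R : realType.

(* Indices are 0-based: row x : 'I_T stands for the paper's index x+1,
   so T - x + 1 (paper) becomes T - x here (always >= 1). *)

Definition Lambda_pc (T : nat) : 'M[R]_T :=
  \matrix_(x < T, j < T) ((T - x)%:R)^-1.

Definition shift_b (T : nat) (psi : R) : 'cV[R]_T :=
  \col_(x < T) (psi / (T - x)%:R).

Definition membrane (T : nat) (psi : R) (I : 'cV[R]_T) : 'cV[R]_T :=
  Lambda_pc T *m I + shift_b T psi.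

Definition spike (T : nat) (theta psi : R) (I : 'cV[R]_T) (x : 'I_T) : bool :=
  theta <= membrane psi I x 0.

Definition snn_rate (T : nat) (theta psi : R) (I : 'cV[R]_T) : R :=
  theta / T%:R * \sum_(x < T) (spike theta psi I x)%:R.

Definition avg_input (T : nat) (I : 'cV[R]_T) : R :=
  (T%:R)^-1 * \sum_(t < T) I t 0.

Definition clip (a : int) (N : nat) : int :=
  Num.min (Num.max a 0) (N%:Z).

Definition qcfs (N : nat) (theta psi z : R) : R :=
  theta / N%:R * (clip (Num.floor ((z * N%:R + psi) / theta)) N)%:~R.

End SNN.

(* Main.v *)
Require Import Defs.
From HB Require Import structures.
From mathcomp Require Import all_boot all_order all_algebra.
From mathcomp Require Import all_classical all_reals all_analysis.
From mathcomp Require Import zify ring lra.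
Import Order.TTheory GRing.Theory Num.Theory.
Local Open Scope ring_scope.

Lemma clip_step (f : int) (N : nat) :
  clip f N.+1 = clip f N + (if (N.+1%:Z <= f) then 1 else 0).
Proof.
rewrite /clip; case: ifP => H; lia.
Qed.

Lemma clip_sum (R : realType) (a : R) (N : nat) :
  (clip (Num.floor a) N)%:~R = \sum_(k < N) (((k.+1)%:R <= a)%R)%:R :> R.
Proof.
elim: N => [|N IH].
  rewrite big_ord0 /clip.
  have -> : Num.min (Num.max (Num.floor a) 0) 0%:Z = 0 by lia.
  by [].
rewrite big_ord_recr /= -IH clip_step intrD.
have -> : ((N.+1)%:R <= a) = ((N.+1)%:Z <= Num.floor a) by rewrite floor_ge_int.
by case: ifP.
Qed.

Lemma membraneE (R : realType) T (psi : R) (I : 'cV[R]_T) (x : 'I_T) :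
  membrane psi I x 0 = (\sum_(t < T) I t 0 + psi) / (T - x)%:R.
Proof.
rewrite /membrane mxE /shift_b mxE mulrDl mxE; congr (_ + _).
rewrite mulr_suml; apply: eq_bigr => j _; rewrite !mxE mulrC.
by [].
Qed.

Lemma part_i (R : realType) T (theta psi : R) (I : 'cV[R]_T) :
  (0 < T)%N -> 0 < theta -> snn_rate theta psi I = qcfs T theta psi (avg_input I).
Proof.
move=> T0 th0; rewrite /snn_rate /qcfs clip_sum; congr (_ * _).
rewrite (reindex_inj rev_ord_inj) /=; apply: eq_bigr => k _.
rewrite /spike membraneE /avg_input.
have -> : (T - rev_ord k = k.+1)%N by rewrite /= subKn.
have Tn0 : T%:R != 0 :> R by rewrite pnatr_eq0 -lt0n.
rewrite mulrAC mulVf // mul1r.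
by rewrite ler_pdivlMr ?ltr0Sn // mulrC -ler_pdivlMr.
Qed.

Definition cc (R : realType) (N : nat) (theta : R) (k : nat) : R :=
  theta * (2 * k + 1)%:R / (2 * N)%:R.
Arguments cc {R}.

Lemma qcfs_F (R : realType) N (theta z : R) : (0 < N)%N -> 0 < theta ->
  qcfs N theta (theta / 2) z =
  theta / N%:R * \sum_(k < N) \1_([set` `[cc N theta k, +oo[]) z.
Proof.
move=> N0 th0; rewrite /qcfs clip_sum; congr (_ * _); apply: eq_bigr => k _.
rewrite indicE; congr (_%:R).
rewrite /cc mem_setE in_itv /= andbT.
have N0' : 0 < N%:R :> R by rewrite ltr0n.
rewrite ler_pdivlMr // ler_pdivrMr ?ltr0n ?muln_gt0 //.
rewrite natrD !natrM -natr1 /=.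
apply: f_equal; apply/idP/idP => H; lra.
Qed.

Lemma sum_odd (R : realType) N : \sum_(k < N) (2 * k + 1)%:R = (N * N)%:R :> R.
Proof.
rewrite -natr_sum; congr (_%:R); elim: N => [|N IH]; first by rewrite big_ord0.
rewrite big_ord_recr /= IH; lia.
Qed.

Lemma int_F (R : realType) N (theta : R) : (0 < N)%N -> 0 < theta ->
  (\int[@lebesgue_measure R]_(z in `[0%R, theta]%classic)
    (theta / N%:R * \sum_(k < N) \1_([set` `[cc N theta k, +oo[]) z)%:E)%E
  = (theta ^+ 2 / 2)%:E.
Proof.
move=> N0 th0.
have N0' : 0 < N%:R :> R by rewrite ltr0n.
have mD : measurable (`[0%R, theta]%classic : set R) by exact: measurable_itv.
under eq_integral => z _ do rewrite mulr_sumr -sumEFin.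
rewrite ge0_integral_sum //; first last.
- move=> k z _; rewrite lee_fin; apply: mulr_ge0; first by rewrite divr_ge0 ?ltW.
  exact: ler0n.
- move=> k.
  apply: (proj2 (@measurable_realfun.measurable_EFinP _ _ R _ (fun x => theta / N%:R * \1_(`[cc N theta k, +oo[%classic) x))).
  exact: measurable_realfun.measurable_funM.
have ck0 : forall k : 'I_N, 0 <= cc N theta k.
  move=> k; rewrite /cc divr_ge0 // mulr_ge0 // ltW //.
have ckt : forall k : 'I_N, cc N theta k < theta.
  move=> k; rewrite /cc ltr_pdivrMr ?ltr0n ?muln_gt0 //.
  rewrite ltr_pM2l // ltr_nat; have := ltn_ord k; lia.
rewrite (eq_bigr (fun k : 'I_N => ((theta / N%:R) * (theta - cc N theta k))%:E)); last first.
  move=> k _; under eq_integral => z _ do rewrite EFinM.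
  rewrite ge0_integralZl_EFin //; [|apply: (proj2 (@measurable_realfun.measurable_EFinP _ _ R _ (fun x => \1_(`[cc N theta k, +oo[%classic) x))); exact: measurable_realfun.measurable_indic|by rewrite divr_ge0 ?ltW].
  rewrite integral_indic //.
  rewrite (_ : (_ `&` _)%classic = `[cc N theta k, theta]%classic); last first.
    apply/seteqP; split => x /=.
      move=> [H1 H2]; move: H1 H2; rewrite ?mem_setE !in_itv /= andbT => H1 /andP [H2 H3].
      by rewrite H1 H3.
    rewrite ?mem_setE in_itv /= => /andP [H1 H2]; split.
      by rewrite in_itv /= H1.
    by rewrite in_itv /= H2 andbT (le_trans (ck0 k) H1).
  have Hm := @lebesgue_measure_itv R `[cc N theta k, theta].
  rewrite /= lte_fin ckt in Hm.
  transitivity ((theta / N%:R)%:E * (theta%:E + (- cc N theta k)%:E))%E.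
    by congr (_ * _)%E; exact: Hm.
  by rewrite -EFinD -EFinM.
rewrite sumEFin; congr (_%:E).
rewrite -mulr_sumr sumrB sumr_const card_ord.
have Hs : \sum_(i < N) cc N theta i = theta / (2 * N)%:R * (N * N)%:R.
  by rewrite -sum_odd mulr_sumr; apply: eq_bigr => i _; rewrite /cc mulrAC.
rewrite Hs !natrM; field.
by rewrite lt0r_neq0.
Qed.

Lemma intg_F (R : realType) N (theta : R) : (0 < N)%N -> 0 < theta ->
  (@lebesgue_measure R).-integrable (`[0%R, theta]%classic)
    (fun z => (theta / N%:R * \sum_(k < N) \1_([set` `[cc N theta k, +oo[]) z)%:E).
Proof.
move=> N0 th0.
have mD : measurable (`[0%R, theta]%classic : set R) by exact: measurable_itv.
apply/integrableP; split.
  apply: (proj2 (@measurable_realfun.measurable_EFinP _ _ R _ (fun z => theta / N%:R * \sum_(k < N) \1_([set` `[cc N theta k, +oo[]) z))).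
  apply: measurable_realfun.measurable_funM => //.
  apply: measurable_sum => i; exact: measurable_realfun.measurable_indic.
have Fge0 : forall z : R, 0 <= theta / N%:R * \sum_(k < N) \1_([set` `[cc N theta k, +oo[]) z.
  move=> z; apply: mulr_ge0; first by rewrite divr_ge0 ?ler0n ?ltW.
  by apply: sumr_ge0 => i _; exact: ler0n.
under eq_integral => z _ do rewrite abse_EFin (ger0_norm (Fge0 z)).
by rewrite int_F // ltry.
Qed.

Theorem theorem4p1 (R : realType) (T Tt : nat) (theta psi : R) :
  (0 < T)%N -> (0 < Tt)%N -> 0 < theta ->
  (* (i) *)
  (Tt = T -> forall I : 'cV[R]_T,
      snn_rate theta psi I = qcfs Tt theta psi (avg_input I))
  /\
  (* (ii): expectation over z ~ Uniform[0, theta], with I(z) any input of average z *)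
  (Tt <> T -> psi = theta / 2 -> forall I : R -> 'cV[R]_T,
      (forall z : R, z \in `[0, theta] -> avg_input (I z) = z) ->
      ((theta^-1)%:E *
        \int[@lebesgue_measure R]_(z in `[0%R, theta]%classic)
           (snn_rate theta psi (I z) - qcfs Tt theta psi z)%:E)%E = 0%E).
Proof.
move=> T0 Tt0 th0; split.
  by move=> -> I; exact: part_i.
move=> _ -> I HI.
have mD : measurable (`[0%R, theta]%classic : set R) by exact: measurable_itv.
rewrite (@eq_integral _ _ _ (@lebesgue_measure R) _ (fun z =>
   (theta / T%:R * \sum_(k < T) \1_([set` `[cc T theta k, +oo[]) z)%:E -
   (theta / Tt%:R * \sum_(k < Tt) \1_([set` `[cc Tt theta k, +oo[]) z)%:E)%E); last first.
  move=> z zD; rewrite part_i // HI; last by move: zD; rewrite inE.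
  by rewrite !qcfs_F // EFinB.
rewrite integralB_EFin //; last 2 first.
- exact: intg_F.
- exact: intg_F.
by rewrite !int_F // subee // mule0.
Qed.
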